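(* Let $d_{\text{m}}\ge 1$, $1\le r\le d_{\text{m}}$, and $\boldsymbol{W}_{\text{qk},i}\in\mathbb{R}^{d_{\text{m}}\times d_{\text{m}}}$. Let $\boldsymbol{x}_{\text{q}}$ and $\boldsymbol{x}_{\text{kv}}$ be independent random row vectors in $\mathbb{R}^{d_{\text{m}}}$ with distributions $\mathbb{X}_\text{q}$, $\mathbb{X}_\text{kv}$ having finite second moments, such that the autocorrelation matrices $\boldsymbol{R}_{\mathbb{X}_\text{q}\mathbb{X}_\text{q}}:=\mathbb{E}\{\boldsymbol{x}_{\text{q}}^T\boldsymbol{x}_{\text{q}}\}$ and $\boldsymbol{R}_{\mathbb{X}_\text{kv}\mathbb{X}_\text{kv}}:=\mathbb{E}\{\boldsymbol{x}_{\text{kv}}^T\boldsymbol{x}_{\text{kv}}\}$ are positive definite, with unique symmetric square roots $\boldsymbol{R}_{\mathbb{X}_\text{q}\mathbb{X}_\text{q}}^{1/2}$, $\boldsymbol{R}_{\mathbb{X}_\text{kv}\mathbb{X}_\text{kv}}^{1/2}$. Consider the problem $$\operatorname{arg\,min}_{\widetilde{\boldsymbol{W}}_{\text{qk},i}}\ \mathbb{E}\left\{\left(\boldsymbol{x}_{\text{q}}(\boldsymbol{W}_{\text{qk},i}-\widetilde{\boldsymbol{W}}_{\text{qk},i})\boldsymbol{x}_{\text{kv}}^T\right)^2\right\}\quad\text{s.t.}\quad\operatorname{rank}(\widetilde{\boldsymbol{W}}_{\text{qk},i})=r.$$ Then an optimal solution is $$\widetilde{\boldsymbol{W}}_{\t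ext{qk},i}=\left(\boldsymbol{R}_{\mathbb{X}_\text{q}\mathbb{X}_\text{q}}^{1/2}\right)^{-1}\mathrm{SVD}_r\!\left(\boldsymbol{R}_{\mathbb{X}_\text{q}\mathbb{X}_\text{q}}^{1/2}\boldsymbol{W}_{\text{qk},i}\boldsymbol{R}_{\mathbb{X}_\text{kv}\mathbb{X}_\text{kv}}^{1/2}\right)\left(\boldsymbol{R}_{\mathbb{X}_\text{kv}\mathbb{X}_\text{kv}}^{1/2}\right)^{-1}.$$
   Context: $\mathrm{SVD}_r(\boldsymbol{M})$ denotes the truncated SVD: if $\boldsymbol{M}=\boldsymbol{U}\boldsymbol{\Sigma}\boldsymbol{V}^T$ is a singular value decomposition with singular values in decreasing order, then $\mathrm{SVD}_r(\boldsymbol{M})=\boldsymbol{U}_{:,:r}\boldsymbol{\Sigma}_{:r,:r}\boldsymbol{V}^T_{:r,:}$. Here $\boldsymbol{W}_{\text{qk},i}=\boldsymbol{W}_{\text{q},i}\boldsymbol{W}_{\text{k},i}^T$ is the fused query/key weight of attention head $i$, and the objective is the expected squared error of the pre-softmax attention score $\boldsymbol{x}_{\text{q}}\boldsymbol{W}_{\text{qk},i}\boldsymbol{x}_{\text{kv}}^T$. Vectors are row vectors. *)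

(* Defs.v *)
From HB Require Import structures.
From mathcomp Require Import all_boot all_order all_algebra.
From mathcomp Require Import all_classical all_reals all_analysis.
Set Implicit Arguments. Unset Strict Implicit. Unset Printing Implicit Defensive.
Import Order.TTheory GRing.Theory Num.Theory.
Local Open Scope classical_set_scope.
Local Open Scope ring_scope.

(* A random row vector in R^n on a probability space T is given by its
   n real coordinates X i : T -> R.  The row vector at outcome t: *)
Definition rvec {T : Type} {R : realType} {n : nat} (X : 'I_n -> T -> R) (t : T)
  : 'rV[R]_n := \row_i X i t.

Definition rvec_measurable {d} {T : measurableType d} {R : realType} {n : nat}
  (X : 'I_n -> T -> R) : Prop := forall i, measurable_fun setT (X i).

Definition finite_second_moments {d} {T : measurableType d} {R : realType}
  (P : probability T R) {n : nat} (X : 'I_n -> T -> R) : Prop :=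
  forall i, P.-integrable setT (fun t => ((X i t) ^+ 2)%:E).

(* Independence of two random vectors: the joint law on product rectangles
   (a pi-system generating the Borel sigma-algebra of R^n x R^n) factorises. *)
Definition indep_rvec {d} {T : measurableType d} {R : realType}
  (P : probability T R) {n : nat} (X Y : 'I_n -> T -> R) : Prop :=
  forall A B : 'I_n -> set R,
    (forall i, measurable (A i)) -> (forall j, measurable (B j)) ->
    P ((\bigcap_i (X i @^-1` A i)) `&` (\bigcap_j (Y j @^-1` B j)))
    = (P (\bigcap_i (X i @^-1` A i)) * P (\bigcap_j (Y j @^-1` B j)))%E.

Definition autocorr {d} {T : measurableType d} {R : realType}
  (P : probability T R) {n : nat} (X : 'I_n -> T -> R) : 'M[R]_n :=
  \matrix_(i, j) Rintegral P setT (fun t => X i t * X j t).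

Definition attn_err {d} {T : measurableType d} {R : realType}
  (P : probability T R) {n : nat} (Xq Xkv : 'I_n -> T -> R) (W Wt : 'M[R]_n) : R :=
  Rintegral P setT
    (fun t => ((rvec Xq t *m (W - Wt) *m (rvec Xkv t)^T) 0 0) ^+ 2).

Definition posdef {R : realType} {n : nat} (A : 'M[R]_n) : Prop :=
  A^T = A /\ forall v : 'rV[R]_n, v != 0 -> 0 < (v *m A *m v^T) 0 0.

Definition is_svd {R : realType} {n : nat} (M U V : 'M[R]_n) (s : 'rV[R]_n) : Prop :=
  [/\ U^T *m U = 1%:M, V^T *m V = 1%:M,
      (forall j, 0 <= s 0 j),
      (forall i j : 'I_n, (i <= j)%N -> s 0 j <= s 0 i)
    & M = U *m diag_mx s *m V^T].

(* SVD_r(M) = U_{:,:r} Sigma_{:r,:r} V^T_{:r,:} for the SVD (U, s, V). *)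
Definition svd_trunc {R : realType} {n r : nat} (H : (r <= n)%N)
  (U V : 'M[R]_n) (s : 'rV[R]_n) : 'M[R]_n :=
  colsub (widen_ord H) U *m diag_mx (\row_(j < r) s 0 (widen_ord H j))
    *m rowsub (widen_ord H) V^T.

(* Main.v *)
Require Import Defs.
From HB Require Import structures.
From mathcomp Require Import all_boot all_order all_algebra.
From mathcomp Require Import all_classical all_reals all_analysis.
From mathcomp Require Import measurable_realfun.
From mathcomp Require Import lra ring.
Import Order.TTheory GRing.Theory Num.Theory.
Local Open Scope classical_set_scope.
Local Open Scope ring_scope.

Set Implicit Arguments. Unset Strict Implicit. Unset Printing Implicit Defensive.

Section indep.
Local Open Scope ereal_scope.
Context d (T : measurableType d) (R : realType) (P : probability T R).

Lemma Pfin (A : set T) : measurable A -> P A \is a fin_num.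
Proof.
move=> mA; rewrite ge0_fin_numE ?measure_ge0 //.
exact: (le_lt_trans (probability_le1 _ mA)) (ltry _).
Qed.

Lemma indep_ext1 d1 (T1 : measurableType d1) (F : T -> T1)
  (mF : measurable_fun setT F) (E : set T) (mE : measurable E)
  (C : set (set T1)) (hC : @measurable _ T1 = <<s C>>) (CI : setI_closed C)
  (CT : C setT)
  (h : forall A, C A -> P (F @^-1` A `&` E) = P (F @^-1` A) * P E) :
  forall A, measurable A -> P (F @^-1` A `&` E) = P (F @^-1` A) * P E.
Proof.
pose m1 := measure_function_pushforward__canonical__measure_function_Measure
  (mrestr P mE) mF.
have c0 : (0 <= fine (P E))%R := fine_ge0 (measure_ge0 _ _).
pose m2 := measure_function_pushforward__canonical__measure_function_Measure
  (mscale (NngNum c0) P) mF.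
have key : forall A, P (F @^-1` A) * P E = m2 A.
  move=> A; have -> : m2 A = (fine (P E))%:E * P (F @^-1` A) by reflexivity.
  rewrite [RHS]muleC. congr (_ * _). exact/esym/fineK/Pfin.
move=> A mA; rewrite key.
apply: (measure_unique C (fun _ => setT) hC CI (fun _ => CT) _ m1 m2) => //.
- by rewrite bigcup_const.
- by move=> B CB; rewrite -key -h.
- move=> _; change (P (F @^-1` setT `&` E) < +oo).
  apply: (le_lt_trans (probability_le1 _ _)) (ltry _).
  by apply: measurableI => //; rewrite preimage_setT.
Qed.

Lemma mpre d1 (T1 : measurableType d1) (F : T -> T1)
  (mF : measurable_fun setT F) A : measurable A -> measurable (F @^-1` A).
Proof. by move=> mA; rewrite -[X in measurable X]setTI; exact: mF. Qed.

Lemma indep_ext2 d1 d2 (T1 : measurableType d1) (T2 : measurableType d2)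
  (F : T -> T1) (G : T -> T2)
  (mF : measurable_fun setT F) (mG : measurable_fun setT G)
  (C1 : set (set T1)) (hC1 : @measurable _ T1 = <<s C1>>) (CI1 : setI_closed C1)
  (CT1 : C1 setT)
  (C2 : set (set T2)) (hC2 : @measurable _ T2 = <<s C2>>) (CI2 : setI_closed C2)
  (CT2 : C2 setT)
  (h : forall A B, C1 A -> C2 B ->
    P (F @^-1` A `&` G @^-1` B) = P (F @^-1` A) * P (G @^-1` B)) :
  forall A B, measurable A -> measurable B ->
    P (F @^-1` A `&` G @^-1` B) = P (F @^-1` A) * P (G @^-1` B).
Proof.
have h1 : forall A B, measurable A -> C2 B ->
    P (F @^-1` A `&` G @^-1` B) = P (F @^-1` A) * P (G @^-1` B).
  move=> A B mA CB.
  have mB : measurable (G @^-1` B).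
    by apply: (mpre mG); rewrite hC2; exact: sub_sigma_algebra.
  apply: (indep_ext1 mF mB hC1 CI1 CT1) => //.
  by move=> A' CA'; exact: h.
move=> A B mA mB; rewrite setIC [RHS]muleC.
apply: (indep_ext1 mG (mpre mF mA) hC2 CI2 CT2) => //.
by move=> B' CB'; rewrite setIC muleC; apply: h1.
Qed.

Lemma prod_gen d1 d2 (T1 : measurableType d1) (T2 : measurableType d2) :
  let C := [set A `*` B | A in @measurable _ T1 & B in @measurable _ T2] in
  [/\ @measurable _ (T1 * T2)%type = <<s C>>, setI_closed C & C setT].
Proof.
move=> C; split.
- exact: measurable_prod_measurableType.
- move=> _ _ [A1 mA1 [B1 mB1 <-]] [A2 mA2 [B2 mB2 <-]].
  rewrite -setXI; exists (A1 `&` A2); first exact: measurableI.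
  by exists (B1 `&` B2) => //; exact: measurableI.
- by exists setT => //; exists setT => //; rewrite setXTT.
Qed.

Lemma mfst_abs : measurable_fun setT (fun z : R * R => ((`|z.1| * `|z.2|)%R%:E : \bar R)).
Proof.
apply/measurable_EFinP.
apply: (measurable_funM (f := fun z : R * R => `|z.1|%R) (g := fun z : R * R => `|z.2|%R)).
- by apply: measurableT_comp; [exact: normr_measurable|exact: measurable_fst].
- by apply: measurableT_comp; [exact: normr_measurable|exact: measurable_snd].
Qed.

Lemma mfst_mul : measurable_fun setT (fun z : R * R => ((z.1 * z.2)%R%:E : \bar R)).
Proof.
apply/measurable_EFinP.
exact: (measurable_funM (f := fun z : R * R => z.1) (g := fun z : R * R => z.2)
  measurable_fst measurable_snd).
Qed.

Lemma int_abs_fin (U : T -> R) : P.-integrable setT (EFin \o U) ->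
  \int[P]_t (`|U t|)%:E < +oo.
Proof.
by case/integrableP => _; rewrite /comp; under eq_integral do rewrite abse_EFin. 
Qed.

Lemma indep_mul (U V : T -> R)
  (mU : measurable_fun setT U) (mV : measurable_fun setT V)
  (hUV : forall A B, measurable A -> measurable B ->
    P (U @^-1` A `&` V @^-1` B) = P (U @^-1` A) * P (V @^-1` B))
  (iU : P.-integrable setT (EFin \o U)) (iV : P.-integrable setT (EFin \o V)) :
  P.-integrable setT (fun t => (U t * V t)%R%:E) /\
  \int[P]_t (U t * V t)%R%:E = \int[P]_t (U t)%:E * \int[P]_t (V t)%:E.
Proof.
pose Uf : {mfun T >-> R} := HB.pack U (isMeasurableFun.Build _ _ _ _ U mU).
pose Vf : {mfun T >-> R} := HB.pack V (isMeasurableFun.Build _ _ _ _ V mV).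
pose muU := distribution P Uf.
pose muV := distribution P Vf.
have mW : measurable_fun setT (fun t => (U t, V t)) := measurable_fun_pair mU mV.
pose muW := measure_function_pushforward__canonical__measure_function_Measure P mW.
have eqW : forall X, measurable X -> (muU \x muV) X = muW X.
  apply: product_measure_unique => A B mA mB.
  change (P (U @^-1` A `&` V @^-1` B) = P (U @^-1` A) * P (V @^-1` B)).
  exact: hUV.
have eqI : forall f, \int[muU \x muV]_z f z = \int[muW]_z f z.
  by move=> f; apply: eq_measure_integral => X mX _; exact: eqW.
have pW : forall f : R * R -> \bar R, measurable_fun setT f -> (forall z, 0 <= f z) ->
   \int[muW]_z f z = \int[P]_t f (U t, V t).
  move=> f mf f0.
  change (\int[pushforward P (fun t => (U t, V t))]_z f z = \int[P]_t f (U t, V t)).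
  by rewrite ge0_integral_pushforward // preimage_setT.
have tonelli : \int[P]_t (`|U t| * `|V t|)%R%:E =
    \int[P]_t (`|U t|)%:E * \int[P]_t (`|V t|)%:E.
  rewrite -(pW _ mfst_abs) //= -eqI fubini_tonelli1 //=; last exact: mfst_abs.
  rewrite /fubini_F /=.
have mabs : measurable_fun setT (fun y : R => (`|y|)%:E : \bar R).
    by apply/measurable_EFinP; exact: normr_measurable.
  have inner : forall x : R, \int[muV]_y (`|x| * `|y|)%R%:E = (`|x|)%:E * \int[muV]_y (`|y|)%:E.
    move=> x; under eq_integral do rewrite EFinM.
    by apply: ge0_integralZl_EFin => //.
  under eq_integral do rewrite inner.
  rewrite ge0_integralZr //; last exact: integral_ge0.
  by rewrite !ge0_integral_distribution.
have iUV : P.-integrable setT (fun t => (U t * V t)%R%:E).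
  apply/integrableP; split.
    by apply/measurable_EFinP; exact: measurable_funM.
  under eq_integral do rewrite abse_EFin normrM.
  rewrite tonelli lte_mul_pinfty //.
  - exact: integral_ge0.
  - rewrite ge0_fin_numE; [exact: int_abs_fin|exact: integral_ge0].
  - exact: int_abs_fin.
split => //.
have intE : forall (X : {mfun T >-> R}), P.-integrable setT (EFin \o X) ->
    (distribution P X).-integrable setT (fun y : R => y%:E).
  move=> X iX; apply/integrableP; split.
    by apply/measurable_EFinP; exact: measurable_id.
  under eq_integral do rewrite abse_EFin.
  rewrite ge0_integral_distribution //; first exact: int_abs_fin.
  by apply/measurable_EFinP; exact: normr_measurable.
have intprod : (muU \x muV).-integrable setT (fun z : R * R => (z.1 * z.2)%R%:E).
  apply/integrableP; split; first exact: mfst_mul.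
  rewrite eqI pW //; last first.
    apply: measurableT_comp => //; exact: mfst_mul.
  by case/integrableP: iUV.
have -> : \int[P]_t (U t * V t)%R%:E = \int[muW]_z (z.1 * z.2)%R%:E.
  change (\int[P]_t (U t * V t)%R%:E =
    \int[pushforward P (fun t => (U t, V t))]_z (z.1 * z.2)%R%:E).
  by rewrite integral_pushforward //; exact: mfst_mul.
rewrite -eqI -(integral12_prod_meas1 intprod) /fubini_F /=.
have inner : forall x : R, \int[muV]_y (x * y)%R%:E = x%:E * \int[P]_t (V t)%:E.
  move=> x; under eq_integral do rewrite EFinM.
  rewrite integralZl //; last exact: intE.
  by rewrite integral_distribution //; apply/measurable_EFinP; exact: measurable_id.
under eq_integral do rewrite inner.
have fV : \int[P]_t (V t)%:E \is a fin_num by exact: integrable_fin_num.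
rewrite -(fineK fV) integralZr //; last exact: intE.
rewrite integral_distribution //; apply/measurable_EFinP; exact: measurable_id.
Qed.
End indep.


Section coord.
Local Open Scope ereal_scope.
Context d (T : measurableType d) (R : realType) (P : probability T R).

Lemma pre_pair n (X : 'I_n -> T -> R) (i k : 'I_n) (A1 A2 : set R) :
  (fun t => (X i t, X k t)) @^-1` (A1 `*` A2) =
  \bigcap_m (X m @^-1` ((if m == i then A1 else setT) `&` (if m == k then A2 else setT))).
Proof.
apply/seteqP; split => t /=.
  move=> [h1 h2] m _ /=; split; case: eqP => // ->; done.
move=> h; split.
  by have := h i I; rewrite /= eqxx => -[].
by have := h k I; rewrite /= eqxx => -[].
Qed.

Lemma mif n (i m : 'I_n) (A : set R) : measurable A ->
  measurable (if m == i then A else setT).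
Proof. by case: eqP. Qed.

Lemma indep_coord n (Xq Xkv : 'I_n -> T -> R)
  (mXq : rvec_measurable Xq) (mXkv : rvec_measurable Xkv)
  (indep : indep_rvec P Xq Xkv) (i k j l : 'I_n) :
  forall A B, measurable A -> measurable B ->
  P ((fun t => Xq i t * Xq k t)%R @^-1` A `&` (fun t => Xkv j t * Xkv l t)%R @^-1` B)
  = P ((fun t => Xq i t * Xq k t)%R @^-1` A) * P ((fun t => Xkv j t * Xkv l t)%R @^-1` B).
Proof.
have mF : measurable_fun setT (fun t => (Xq i t, Xq k t)) := measurable_fun_pair (mXq i) (mXq k).
have mG : measurable_fun setT (fun t => (Xkv j t, Xkv l t)) := measurable_fun_pair (mXkv j) (mXkv l).
have [hC1 CI1 CT1] := prod_gen R R.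
have hFG := indep_ext2 (P:=P) mF mG hC1 CI1 CT1 hC1 CI1 CT1.
have mmul : measurable_fun setT (fun z : R * R => (z.1 * z.2)%R).
  exact: (measurable_funM (f := fun z : R * R => z.1) (g := fun z : R * R => z.2)
    measurable_fst measurable_snd).
move=> A B mA mB.
have mA' : measurable ((fun z : R * R => (z.1 * z.2)%R) @^-1` A).
  by rewrite -[X in measurable X]setTI; exact: mmul.
have mB' : measurable ((fun z : R * R => (z.1 * z.2)%R) @^-1` B).
  by rewrite -[X in measurable X]setTI; exact: mmul.
apply: (hFG _ _ _ mA' mB').
move=> _ _ [A1 mA1 [A2 mA2 <-]] [B1 mB1 [B2 mB2 <-]].
rewrite !pre_pair; apply: indep => m; apply: measurableI; exact: mif.
Qed.


Lemma int_sq_prod n (X : 'I_n -> T -> R) (mX : rvec_measurable X)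
  (m2 : finite_second_moments P X) (i k : 'I_n) :
  P.-integrable setT (EFin \o (fun t => X i t * X k t)%R).
Proof.
apply: (le_integrable measurableT (g := fun t => (X i t ^+ 2 + X k t ^+ 2)%R%:E)).
- by apply/measurable_EFinP; exact: measurable_funM.
- move=> t _; rewrite /comp !abse_EFin lee_fin [X in (_ <= X)%R]ger0_norm; last first.
    by apply: addr_ge0; exact: sqr_ge0.
  rewrite ler_norml; apply/andP; split; nra.
- under eq_fun do rewrite EFinD; exact: integrableD.
Qed.

Lemma int_sum (I : Type) (s : seq I) (g : I -> T -> R) :
  (forall i, P.-integrable setT (EFin \o g i)) ->
  P.-integrable setT (EFin \o (fun t => \sum_(i <- s) g i t)%R).
Proof.
move=> ig; apply: (eq_integrable measurableT (fun t => \sum_(i <- s) (g i t)%:E)).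
  by move=> t _; rewrite /= sumEFin.
by apply: integrable_sum => // i _; exact: ig.
Qed.

Lemma Rintegral_sum (I : Type) (s : seq I) (g : I -> T -> R) :
  (forall i, P.-integrable setT (EFin \o g i)) ->
  Rintegral P setT (fun t => \sum_(i <- s) g i t)%R = (\sum_(i <- s) Rintegral P setT (g i))%R.
Proof.
move=> ig; elim: s => [|a s IH].
  rewrite big_nil /Rintegral; under eq_integral do rewrite big_nil.
  by rewrite integral0.
rewrite big_cons -IH -RintegralD //; last exact: int_sum.
by apply: eq_Rintegral => t _; rewrite big_cons.
Qed.

Lemma int_scale (c : R) (g : T -> R) : P.-integrable setT (EFin \o g) ->
  P.-integrable setT (EFin \o (fun t => c * g t)%R).
Proof.
move=> ig; apply: (eq_integrable measurableT (fun t => c%:E * (g t)%:E));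
  last exact: integrableZl.
by move=> t _; rewrite /= EFinM.
Qed.

Lemma E4 n (Xq Xkv : 'I_n -> T -> R)
  (mXq : rvec_measurable Xq) (mXkv : rvec_measurable Xkv)
  (indep : indep_rvec P Xq Xkv)
  (m2q : finite_second_moments P Xq) (m2kv : finite_second_moments P Xkv)
  (i k j l : 'I_n) :
  P.-integrable setT (EFin \o (fun t => Xq i t * Xq k t * (Xkv j t * Xkv l t))%R) /\
  Rintegral P setT (fun t => Xq i t * Xq k t * (Xkv j t * Xkv l t))%R =
    (autocorr P Xq i k * autocorr P Xkv l j)%R.
Proof.
have mU : measurable_fun setT (fun t => Xq i t * Xq k t)%R by exact: measurable_funM.
have mV : measurable_fun setT (fun t => Xkv j t * Xkv l t)%R by exact: measurable_funM.
have [h1 h2] := indep_mul mU mV (indep_coord mXq mXkv indep i k j l)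
  (int_sq_prod mXq m2q i k) (int_sq_prod mXkv m2kv j l).
split; first exact: h1.
rewrite /Rintegral h2 fineM; first last.
- exact: (integrable_fin_num measurableT (int_sq_prod mXkv m2kv j l)).
- exact: (integrable_fin_num measurableT (int_sq_prod mXq m2q i k)).
rewrite !mxE; congr (_ * _)%R; rewrite /Rintegral.
by congr fine; apply: eq_integral => t _; rewrite mulrC.
Qed.

End coord.

Section attn.
Context d (T : measurableType d) (R : realType) (P : probability T R).

Lemma sq_expand n (x y : 'rV[R]_n) (D : 'M[R]_n) :
  ((x *m D *m y^T) 0 0) ^+ 2 =
  \sum_i \sum_j \sum_k \sum_l D i j * D k l * (x 0 i * x 0 k * (y 0 j * y 0 l)).
Proof.
have sE : (x *m D *m y^T) 0 0 = \sum_i \sum_j x 0 i * D i j * y 0 j.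
  rewrite mxE exchange_big /=; apply: eq_bigr => j _.
  rewrite !mxE big_distrl /=; apply: eq_bigr => i _; by rewrite ?mxE.
rewrite expr2 {1}sE big_distrl; apply: eq_bigr => i _.
rewrite big_distrl; apply: eq_bigr => j _.
rewrite sE big_distrr; apply: eq_bigr => k _.
rewrite big_distrr; apply: eq_bigr => l _ /=.
ring.
Qed.

Lemma trace4 n (A B D : 'M[R]_n) :
  \tr (A *m D *m B *m D^T) =
  \sum_i \sum_j \sum_k \sum_l D i j * D k l * (A i k * B l j).
Proof.
rewrite /mxtrace; apply: eq_bigr => i _.
rewrite mxE; apply: eq_bigr => j _.
rewrite !mxE big_distrl /=.
under eq_bigr => l _ do rewrite mxE !big_distrl.
rewrite exchange_big /=; apply: eq_bigr => k _; apply: eq_bigr => l _ /=.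
ring.
Qed.
Lemma attn_errE n (Xq Xkv : 'I_n -> T -> R)
  (mXq : rvec_measurable Xq) (mXkv : rvec_measurable Xkv)
  (indep : indep_rvec P Xq Xkv)
  (m2q : finite_second_moments P Xq) (m2kv : finite_second_moments P Xkv)
  (W Z : 'M[R]_n) :
  attn_err P Xq Xkv W Z =
  \tr (autocorr P Xq *m (W - Z) *m autocorr P Xkv *m (W - Z)^T).
Proof.
rewrite trace4 /attn_err.
under eq_Rintegral do rewrite sq_expand.
have hE := E4 mXq mXkv indep m2q m2kv.
have iT : forall i j k l, P.-integrable setT (EFin \o (fun t =>
   (W - Z) i j * (W - Z) k l * (rvec Xq t 0 i * rvec Xq t 0 k * (rvec Xkv t 0 j * rvec Xkv t 0 l)))).
  move=> i j k l; apply: int_scale.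
  apply: (eq_integrable measurableT (EFin \o (fun t => Xq i t * Xq k t * (Xkv j t * Xkv l t)))).
    by move=> t _; rewrite /= !mxE.
  exact: (hE i k j l).1.
rewrite Rintegral_sum; last first.
  by move=> i; apply: int_sum => j; apply: int_sum => k; apply: int_sum => l; exact: iT.
apply: eq_bigr => i _.
rewrite Rintegral_sum; last first.
  by move=> j; apply: int_sum => k; apply: int_sum => l; exact: iT.
apply: eq_bigr => j _.
rewrite Rintegral_sum; last first.
  by move=> k; apply: int_sum => l; exact: iT.
apply: eq_bigr => k _.
rewrite Rintegral_sum; last by move=> l; exact: iT.
apply: eq_bigr => l _.
rewrite RintegralZl //; last first.
  apply: (eq_integrable measurableT (EFin \o (fun t => Xq i t * Xq k t * (Xkv j t * Xkv l t)))).
    by move=> t _; rewrite /= !mxE.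
  exact: (hE i k j l).1.
congr (_ * _).
rewrite -(hE i k j l).2; apply: eq_Rintegral => t _; by rewrite !mxE.
Qed.

End attn.

Section LA.
Variable R : realType.

Definition fro n (A : 'M[R]_n) := \tr (A *m A^T).

Lemma froE n (A : 'M[R]_n) : fro A = \sum_i \sum_j A i j ^+ 2.
Proof.
rewrite /fro /mxtrace; apply: eq_bigr => i _; rewrite mxE.
by apply: eq_bigr => j _; rewrite mxE expr2.
Qed.

Lemma fro_ge0 n (A : 'M[R]_n) : 0 <= fro A.
Proof.
rewrite froE; apply: sumr_ge0 => i _; apply: sumr_ge0 => j _; exact: sqr_ge0.
Qed.

Lemma tr_orth n (U V N : 'M[R]_n) (s : 'rV[R]_n) : U^T *m U = 1%:M ->
  \tr ((U *m diag_mx s *m V^T) *m N *m (U *m diag_mx s *m V^T)^T) =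
  \tr (diag_mx s *m (V^T *m N *m V) *m diag_mx s).
Proof.
move=> hU; rewrite !trmx_mul trmxK tr_diag_mx !mulmxA.
by rewrite mxtrace_mulC !mulmxA hU mul1mx.
Qed.

Lemma tr_sandwich n (s : 'rV[R]_n) (Q : 'M[R]_n) :
  \tr (diag_mx s *m Q *m diag_mx s) = \sum_j s 0 j ^+ 2 * Q j j.
Proof.
rewrite /mxtrace; apply: eq_bigr => j _.
rewrite mul_mx_diag mxE mul_diag_mx mxE; ring.
Qed.

Lemma idem_diag n (Q : 'M[R]_n) : Q^T = Q -> Q *m Q = Q ->
  forall j, 0 <= Q j j <= 1.
Proof.
move=> hT hI j.
have sym : forall a b, Q a b = Q b a by move=> a b; rewrite -[in LHS]hT mxE.
have e : Q j j = \sum_l Q j l ^+ 2.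
  rewrite -{1}hI mxE; apply: eq_bigr => l _; by rewrite expr2 (sym l j).
have g0 : 0 <= Q j j by rewrite e; apply: sumr_ge0 => l _; exact: sqr_ge0.
have le : Q j j ^+ 2 <= Q j j.
  rewrite [X in _ <= X]e (bigD1 j) //= lerDl; apply: sumr_ge0 => l _; exact: sqr_ge0.
apply/andP; split => //; rewrite expr2 in le; nra.
Qed.

Lemma sum_ind n r : (r <= n)%N -> \sum_(j < n) ((j : nat) < r)%:R = r%:R :> R.
Proof.
move=> hrn.
rewrite -(big_mkord xpredT (fun j => ((j < r)%N)%:R)) (big_cat_nat (n:=r)) //=.
rewrite [X in X + _]big_nat_cond [X in _ + X]big_nat_cond.
rewrite (eq_bigr (fun _ => 1)); last by move=> j /andP[/andP[_ ->]].
rewrite [X in _ + X](eq_bigr (fun _ => 0)); last first.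
  by move=> j /andP[/andP[h _] _]; rewrite ltnNge h.
rewrite big1_eq addr0 -big_nat_cond sumr_const_nat subn0.
by [].
Qed.


Lemma rearr n r (a q : 'I_n -> R) : (r <= n)%N ->
  (forall i j : 'I_n, (i <= j)%N -> a j <= a i) -> (forall j, 0 <= a j) ->
  (forall j, 0 <= q j <= 1) -> \sum_j q j <= r%:R ->
  \sum_j a j * q j <= \sum_(j < n) ((j : nat) < r)%:R * a j.
Proof.
move=> hrn dec a0 q01 sq.
have [c [c0 hc]] : exists c, 0 <= c /\ forall j : 'I_n,
    (if (j < r)%N then c <= a j else a j <= c).
  case: (ltnP r n) => h.
    exists (a (Ordinal h)); split; first exact: a0.
    move=> j; case: ifP => hj; apply: dec => /=; first exact: ltnW.
    by rewrite leqNgt hj.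
  exists 0; split => // j; case: ifP => hj; first exact: a0.
  by have := ltn_ord j; move/leq_trans/(_ h); rewrite hj.
have pt : forall j, a j * q j - ((j : nat) < r)%:R * a j <= c * (q j - ((j : nat) < r)%:R).
  move=> j; have := hc j; have /andP[q0 q1] := q01 j.
  case: (j < r)%N => h /=; rewrite ?mul1r ?mul0r ?subr0; nra.
have : \sum_(j < n) (a j * q j - ((j : nat) < r)%:R * a j) <=
    \sum_(j < n) c * (q j - ((j : nat) < r)%:R).
  by apply: ler_sum => j _; exact: pt.
rewrite sumrB -mulr_sumr sumrB sum_ind //.
have : c * (\sum_j q j - r%:R) <= 0 by apply: mulr_ge0_le0 => //; rewrite subr_le0.
move=> h1 h2; lra.
Qed.

Lemma rowv0 n (x : 'rV[R]_n) : x *m x^T = 0 -> x = 0.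
Proof.
move=> h; apply/rowP => j; rewrite mxE.
have := congr1 (fun (M : 'M[R]_1) => M 0 0) h; rewrite !mxE => h0.
have hF : forall i, xpredT i -> 0 <= x 0 i * x^T i 0.
  by move=> i _; rewrite mxE -expr2 sqr_ge0.
have := @psumr_eq0P _ _ xpredT _ hF h0 j isT.
by rewrite /= mxE => /eqP; rewrite mulf_eq0 orbb => /eqP.
Qed.

Lemma proj_of k n (A : 'M[R]_(k, n)) : row_free A -> exists Pm : 'M[R]_n,
  [/\ Pm^T = Pm, Pm *m Pm = Pm, \tr Pm = k%:R &
     forall m (D : 'M[R]_(m, k)), (D *m A) *m Pm = D *m A].
Proof.
move=> fA.
have Gu : A *m A^T \in unitmx.
  rewrite -row_free_unit; apply/inj_row_free => v hv.
  have : (v *m A) *m (v *m A)^T = 0.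
    by rewrite trmx_mul !mulmxA -(mulmxA v A) hv !mul0mx.
  move/rowv0 => vA0.
  by apply: (row_free_inj fA); rewrite mul0mx.
set Gi := invmx (A *m A^T).
exists (A^T *m Gi *m A); split.
- by rewrite !trmx_mul trmxK /Gi trmx_inv trmx_mul trmxK mulmxA.
- rewrite -!mulmxA [A *m (A^T *m _)]mulmxA [A *m A^T *m _]mulmxA.
  by rewrite /Gi mulmxV // mul1mx.
- by rewrite mxtrace_mulC mulmxA /Gi mulmxV // mxtrace1.
- move=> m D; rewrite -!mulmxA; congr (_ *m _).
  by rewrite !mulmxA /Gi mulmxV // mul1mx.
Qed.

Lemma proj_exists n (B : 'M[R]_n) : exists Pm : 'M[R]_n,
  [/\ Pm^T = Pm, Pm *m Pm = Pm, \tr Pm = (\rank B)%:R & B *m Pm = B].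
Proof.
have [Pm [h1 h2 h3 h4]] := proj_of (row_base_free B).
exists Pm; split => //.
have /submxP [D ->] : (B <= row_base B)%MS by rewrite eq_row_base.
exact: h4.
Qed.

Lemma fro_svd n (U V : 'M[R]_n) (t : 'rV[R]_n) : U^T *m U = 1%:M -> V^T *m V = 1%:M ->
  fro (U *m diag_mx t *m V^T) = \sum_j t 0 j ^+ 2.
Proof.
move=> hU hV; rewrite /fro.
have := tr_orth V 1%:M t hU.
rewrite !mulmx1 hV => ->; rewrite tr_sandwich.
by apply: eq_bigr => j _; rewrite mxE eqxx mulr1.
Qed.

Lemma EY_lower n (M U V : 'M[R]_n) (s : 'rV[R]_n) r (B : 'M[R]_n) :
  is_svd M U V s -> (r <= n)%N -> (\rank B <= r)%N ->
  \sum_(j < n) ((1 - ((j : nat) < r)%:R) * s 0 j) ^+ 2 <= fro (M - B).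
Proof.
case => hU hV s0 sdec hM hrn hB.
have [Pm [PT PI Ptr BP]] := proj_exists B.
set X := M *m (1%:M - Pm).
set Y := (M - B) *m Pm.
have eXY : M - B = X + Y by rewrite /X /Y mulmxBr mulmx1 mulmxBl BP addrA subrK.
have cross : X *m Y^T = 0.
  rewrite /X /Y trmx_mul PT !mulmxA -(mulmxA M) mulmxBl mul1mx PI subrr.
  by rewrite mulmx0 mul0mx.
have cross2 : Y *m X^T = 0.
  by rewrite -[Y *m X^T]trmxK trmx_mul trmxK cross trmx0.
have froXY : fro (M - B) = fro X + fro Y.
  rewrite eXY /fro raddfD /= mulmxDl !mulmxDr !mxtraceD cross cross2.
  by rewrite mxtrace0 addr0 add0r.
have idc : (1%:M - Pm) *m (1%:M - Pm) = 1%:M - Pm.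
  by rewrite mulmxBl mul1mx mulmxBr mulmx1 PI subrr subr0.
have froX : fro X = \tr (M *m M^T) - \tr (M *m Pm *m M^T).
  rewrite /fro /X trmx_mul [(1%:M - Pm)^T]raddfB /= trmx1 PT mulmxA -(mulmxA M) idc.
  by rewrite mulmxBr mulmx1 mulmxBl linearB.
have hVV : V *m V^T = 1%:M := mulmx1C hV.
have e1 : \tr (M *m M^T) = \sum_j s 0 j ^+ 2.
  by have := fro_svd s hU hV; rewrite /fro -hM.
set Q := V^T *m Pm *m V.
have e2 : \tr (M *m Pm *m M^T) = \sum_j s 0 j ^+ 2 * Q j j.
  by rewrite hM tr_orth // tr_sandwich.
have QT : Q^T = Q by rewrite /Q !trmx_mul trmxK PT mulmxA.
have QI : Q *m Q = Q.
  rewrite /Q -!mulmxA (mulmxA V) hVV mul1mx (mulmxA Pm) PI.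
  by rewrite !mulmxA.
have Qtr : \sum_j Q j j = (\rank B)%:R.
  have -> : \sum_j Q j j = \tr Q by [].
  by rewrite /Q mxtrace_mulC mulmxA hVV mul1mx Ptr.
have q01 := idem_diag QT QI.
have dec : forall i j : 'I_n, (i <= j)%N -> s 0 j ^+ 2 <= s 0 i ^+ 2.
  by move=> i j h; have := sdec i j h; have := s0 j; nra.
have a0 : forall j, 0 <= s 0 j ^+ 2 by move=> j; exact: sqr_ge0.
have sq : \sum_j Q j j <= r%:R by rewrite Qtr ler_nat.
have H := rearr (a := fun j => s 0 j ^+ 2) (q := fun j => Q j j) hrn dec a0 q01 sq.
have eL : \sum_(j < n) ((1 - ((j : nat) < r)%:R) * s 0 j) ^+ 2 =
    \sum_j s 0 j ^+ 2 - \sum_(j < n) ((j : nat) < r)%:R * s 0 j ^+ 2.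
  rewrite -sumrB; apply: eq_bigr => j _; case: (j < r)%N => /=; ring.
rewrite eL froXY froX e1 e2; have := fro_ge0 Y; move: H => /= H.
lra.
Qed.

Lemma trunc_eq n r (hrn : (r <= n)%N) (U V : 'M[R]_n) (s : 'rV[R]_n) :
  svd_trunc hrn U V s = U *m diag_mx (\row_j (((j : nat) < r)%:R * s 0 j)) *m V^T.
Proof.
apply/matrixP => a b; rewrite /svd_trunc !mul_mx_diag !mxE.
rewrite [RHS](bigID (fun j : 'I_n => (j < r)%N)) /=.
rewrite [X in _ = _ + X]big1 ?addr0; last first.
  by move=> j /negbTE hj; rewrite !mxE hj mul0r mulr0 mul0r.
rewrite (big_ord_narrow hrn); apply: eq_bigr => j _.
by rewrite !mxE /= ltn_ord mul1r.
Qed.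

Lemma diag_pid n k (t : 'rV[R]_n) :
  diag_mx (\row_(j < n) (((j : nat) < k)%:R * t 0 j)) = pid_mx k *m diag_mx t.
Proof.
apply/matrixP => a b; rewrite mul_mx_diag !mxE.
case: (eqVneq a b) => [->|nab]; first by rewrite eqxx /= mulr1n.
by rewrite mulr0n (_ : (a == b :> nat) = false) ?mul0r //; exact/negbTE.
Qed.

Lemma rank_unit n (A X B : 'M[R]_n) : A \in unitmx -> B \in unitmx ->
  \rank (A *m X *m B) = \rank X.
Proof.
move=> uA uB; rewrite mxrankMfree; last by rewrite row_free_unit.
by rewrite (eqmxMfull X (_ : row_full A)) // row_full_unit.
Qed.

Lemma rank_U n (U V X : 'M[R]_n) : U^T *m U = 1%:M -> V^T *m V = 1%:M ->
  \rank (U *m X *m V^T) = \rank X.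
Proof.
move=> hU hV; apply: rank_unit; first by case: (mulmx1_unit hU).
by case: (mulmx1_unit hV).
Qed.

Lemma unit_posdef n (S : 'M[R]_n) : posdef S -> S \in unitmx.
Proof.
case=> _ hp; rewrite -row_free_unit; apply/inj_row_free => v hv.
apply/eqP/negPn/negP => nv; have := hp v nv.
by rewrite hv mul0mx mxE ltxx.
Qed.

Lemma diag_unit n (t : 'rV[R]_n) : (forall j, t 0 j != 0) -> diag_mx t \in unitmx.
Proof.
move=> ht; rewrite unitmxE det_diag unitfE; apply/prodf_neq0 => j _; exact: ht.
Qed.

Lemma rank_trunc_le n k (t : 'rV[R]_n) : (k <= n)%N ->
  (\rank (diag_mx (\row_(j < n) (((j : nat) < k)%:R * t 0 j)%R)) <= k)%N.
Proof.
move=> hk; rewrite diag_pid; apply: leq_trans (mxrankM_maxl _ _) _.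
by rewrite rank_pid_mx.
Qed.

Lemma rank_trunc_eq n k (t : 'rV[R]_n) : (k <= n)%N ->
  (forall j : 'I_n, (j < k)%N -> t 0 j != 0) ->
  \rank (diag_mx (\row_(j < n) (((j : nat) < k)%:R * t 0 j))) = k.
Proof.
move=> hk ht.
pose t' := \row_(j < n) (if ((j : nat) < k)%N then t 0 j else 1).
have -> : \row_(j < n) (((j : nat) < k)%:R * t 0 j) = \row_(j < n) (((j : nat) < k)%:R * t' 0 j).
  by apply/rowP => j; rewrite !mxE; case: ifP => //= _; rewrite !mul0r.
rewrite diag_pid mxrankMfree ?rank_pid_mx // row_free_unit.
by apply: diag_unit => j; rewrite mxE; case: ifP => [/ht //|_]; exact: oner_neq0.
Qed.
End LA.


Unset Implicit Arguments.

Theorem theorem2 (R : realType) (d : measure_display) (T : measurableType d)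
  (P : probability T R) (n r : nat) (hn : (1 <= n)%N) (hr1 : (1 <= r)%N)
  (hrn : (r <= n)%N) (W : 'M[R]_n) (Xq Xkv : 'I_n -> T -> R)
  (mXq : rvec_measurable Xq) (mXkv : rvec_measurable Xkv)
  (indep : indep_rvec P Xq Xkv)
  (m2q : finite_second_moments P Xq) (m2kv : finite_second_moments P Xkv)
  (pdq : posdef (autocorr P Xq)) (pdkv : posdef (autocorr P Xkv))
  (Sq Skv : 'M[R]_n)
  (hSq : posdef Sq) (hSq2 : Sq *m Sq = autocorr P Xq)
  (hSkv : posdef Skv) (hSkv2 : Skv *m Skv = autocorr P Xkv)
  (U V : 'M[R]_n) (s : 'rV[R]_n) (hsvd : is_svd (Sq *m W *m Skv) U V s) :
  let Wt := invmx Sq *m svd_trunc hrn U V s *m invmx Skv in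
  [/\ (\rank Wt <= r)%N,
      ((r <= \rank W)%N -> \rank Wt = r)
    & forall W' : 'M[R]_n, \rank W' = r ->
        attn_err P Xq Xkv W Wt <= attn_err P Xq Xkv W W'].
Proof.
move=> Wt.
have uq := unit_posdef hSq.
have uk := unit_posdef hSkv.
have [hU hV s0 sdec hM] := hsvd.
set t := \row_(j < n) (((j : nat) < r)%:R * s 0 j).
have hT : svd_trunc hrn U V s = U *m diag_mx t *m V^T := trunc_eq hrn U V s.
have rWt : \rank Wt = \rank (diag_mx t).
  by rewrite /Wt rank_unit ?unitmx_inv // hT rank_U.
split.
- by rewrite rWt; exact: rank_trunc_le.
- move=> hrW; rewrite rWt; apply: rank_trunc_eq => // j hj.
  apply/negP => /eqP sj0.
  have sz : forall i : 'I_n, (j <= i)%N -> s 0 i = 0.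
    move=> i hi; apply/eqP; rewrite eq_le s0 andbT -sj0; exact: sdec.
  have es : s = \row_(i < n) (((i : nat) < j)%:R * s 0 i).
    apply/rowP => i; rewrite mxE; case: ltnP => hi /=; first by rewrite mul1r.
    by rewrite mul0r sz.
  have : (\rank (Sq *m W *m Skv) <= j)%N.
    by rewrite hM rank_U // es rank_trunc_le // ltnW // (leq_trans hj).
  rewrite rank_unit // => hWj.
  by have := leq_trans hrW hWj; rewrite leqNgt hj.
- move=> W' hW'.
  have tr_fro : forall D : 'M[R]_n,
      \tr (autocorr P Xq *m D *m autocorr P Xkv *m D^T) = fro (Sq *m D *m Skv).
    move=> D; rewrite -hSq2 -hSkv2 /fro !trmx_mul hSq.1 hSkv.1 !mulmxA.
    by rewrite [RHS]mxtrace_mulC !mulmxA.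
  rewrite !(attn_errE mXq mXkv indep m2q m2kv) !tr_fro.
  have -> : Sq *m (W - Wt) *m Skv = Sq *m W *m Skv - svd_trunc hrn U V s.
    rewrite mulmxBr mulmxBl; congr (_ - _).
    rewrite /Wt !mulmxA mulmxV // mul1mx -mulmxA mulVmx // mulmx1 //.
  have -> : Sq *m (W - W') *m Skv = Sq *m W *m Skv - Sq *m W' *m Skv.
    by rewrite mulmxBr mulmxBl.
  have rB : (\rank (Sq *m W' *m Skv) <= r)%N by rewrite rank_unit // hW'.
  apply: le_trans (EY_lower hsvd hrn rB).
  rewrite hT hM -!mulmxBl -mulmxBr -linearB /= fro_svd //.
  rewrite le_eqVlt; apply/orP; left; apply/eqP; apply: eq_bigr => j _.
  rewrite !mxE; case: ((j : nat) < r)%N => /=; ring.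
Qed.
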